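(* Fix integers $t,\omega$ with $2\le t\le\omega$. For $\Delta\ge1$ let $a=\lfloor\Delta/(\omega-1)\rfloor$. Then as $\Delta\to\infty$, \[ f_t(\Delta,\omega)=(1+o(1))\,\rho_t\big(T(\Delta+a,\omega)\big)=(1+o(1))\,\frac1t\binom{\omega-1}{t-1}\Big(\frac{\Delta}{\omega-1}\Big)^{t-1}. \]
   Context: $\mathcal{G}(\Delta,\omega)$ denotes the class of finite simple graphs $G$ with maximum degree $\Delta(G)\le\Delta$ and clique number $\omega(G)\le\omega$. $k_t(G)$ is the number of copies of $K_t$ in $G$ and $\rho_t(G)=k_t(G)/|V(G)|$. $f_t(\Delta,\omega)=\sup\{\rho_t(G): G\in\mathcal{G}(\Delta,\omega),\ |V(G)|\ge 1\}$. $T(n,r)$ denotes the $r$-partite Turán graph on $n$ vertices: the complete $r$-partite graph on $n$ vertices whose part sizes are all $\lfloor n/r\rfloor$ or $\lceil n/r\rceil$ (when $n<r$ this is $K_n$). *)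

(* Defs.v *)
From Stdlib Require Import Reals.
From mathcomp Require Import all_boot.

Set Implicit Arguments.
Unset Strict Implicit.
Unset Printing Implicit Defensive.

Definition simple_graph (n : nat) (e : rel 'I_n) : Prop :=
  symmetric e /\ irreflexive e.

Definition deg (n : nat) (e : rel 'I_n) (x : 'I_n) : nat := #|[set y | e x y]|.

Definition is_clique (n : nat) (e : rel 'I_n) (S : {set 'I_n}) : bool :=
  [forall x in S, forall y in S, (x != y) ==> e x y].

Definition in_class (Delta omega n : nat) (e : rel 'I_n) : Prop :=
  (forall x : 'I_n, deg e x <= Delta) /\
  (forall S : {set 'I_n}, is_clique e S -> #|S| <= omega).

Definition k_t (t n : nat) (e : rel 'I_n) : nat :=
  #|[set S : {set 'I_n} | (#|S| == t) && is_clique e S]|.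

Definition rho_t (t n : nat) (e : rel 'I_n) : R :=
  Rdiv (INR (k_t t e)) (INR n).

Definition rho_set (t Delta omega : nat) : R -> Prop :=
  fun r => exists (n : nat) (e : rel 'I_n),
      0 < n /\ simple_graph e /\ in_class Delta omega e /\ r = rho_t t e.

(* Turan graph T(n, r): vertex i in part (i mod r); complete r-partite.
   Part sizes are floor(n/r) or ceil(n/r); for n < r this is K_n. *)
Definition turan_rel (n r : nat) : rel 'I_n :=
  fun i j => (nat_of_ord i %% r) != (nat_of_ord j %% r).

Arguments turan_rel : clear implicits.

Definition turan_rho (t n r : nat) : R := rho_t t (turan_rel n r).

Definition main_term (t omega Delta : nat) : R :=
  Rmult (Rmult (Rinv (INR t)) (INR 'C(omega.-1, t.-1)))
        (pow (Rdiv (INR Delta) (INR omega.-1)) t.-1).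

(* Main.v *)
Require Import Defs.
From Stdlib Require Import Reals.
From mathcomp Require Import all_boot.
From Stdlib Require Import Lra.

Ltac slra := lra.
Ltac snra := nra.
Ltac sfield := field.

From mathcomp Require Import all_order all_algebra.
From mathcomp Require Import ring.
Set Implicit Arguments. Unset Strict Implicit. Unset Printing Implicit Defensive.
Import Order.TTheory GRing.Theory Num.Theory.

Open Scope ring_scope.

Lemma prodD1 (RR : comRingType) (T : finType) (S : {set T}) (a : T) (z : T -> RR) :
  a \in S -> \prod_(i in S) z i = z a * \prod_(i in S :\ a) z i.
Proof.
move=> aS; rewrite (bigD1 a) //=; congr (_ * _); apply: eq_bigl => i.
by rewrite in_setD1 andbC.
Qed.

Lemma decomp4 (RR : comRingType) (T : finType) (P : pred {set T}) (a b : T) (z : T -> RR) :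
 a != b ->
 \sum_(S | P S) \prod_(i in S) z i =
   \sum_(S | P S && (a \notin S) && (b \notin S)) \prod_(i in S) z i
 + z a * \sum_(S | P S && (a \in S) && (b \notin S)) \prod_(i in S :\ a) z i
 + z b * \sum_(S | P S && (a \notin S) && (b \in S)) \prod_(i in S :\ b) z i
 + z a * z b * \sum_(S | P S && (a \in S) && (b \in S)) \prod_(i in S :\ a :\ b) z i.
Proof.
move=> ab.
rewrite [LHS](bigID (fun S : {set T} => a \in S)) /= [X in X + _](bigID (fun S : {set T} => b \in S)) /=.
rewrite [X in _ + X](bigID (fun S : {set T} => b \in S)) /=.
rewrite !mulr_sumr.
have -> : \sum_(i | P i && (a \in i) && (b \in i)) \prod_(i0 in i) z i0 =
   \sum_(S | P S && (a \in S) && (b \in S)) z a * z b * \prod_(i in S :\ a :\ b) z i.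
  apply: eq_bigr => S /andP[/andP[_ aS] bS].
  rewrite (prodD1 _ aS) (@prodD1 _ _ (S :\ a) b); first by rewrite mulrA.
  by rewrite in_setD1 eq_sym ab.
have -> : \sum_(i | P i && (a \in i) && (b \notin i)) \prod_(i0 in i) z i0 =
   \sum_(S | P S && (a \in S) && (b \notin S)) z a * \prod_(i in S :\ a) z i.
  by apply: eq_bigr => S /andP[/andP[_ aS] bS]; rewrite (prodD1 _ aS).
have -> : \sum_(i | P i && (a \notin i) && (b \in i)) \prod_(i0 in i) z i0 =
   \sum_(S | P S && (a \notin S) && (b \in S)) z b * \prod_(i in S :\ b) z i.
  by apply: eq_bigr => S /andP[/andP[_ aS] bS]; rewrite (prodD1 _ bS).
ring.

Qed.

Definition sw (T : eqType) (a b i : T) := if i == a then b else if i == b then a else i.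

Lemma swa (T : eqType) (a b : T) : sw a b a = b.
Proof. by rewrite /sw eqxx. Qed.
Lemma swb (T : eqType) (a b : T) : sw a b b = a.
Proof. by rewrite /sw; case: eqVneq => [->|]; rewrite ?eqxx. Qed.
Lemma swo (T : eqType) (a b i : T) : i != a -> i != b -> sw a b i = i.
Proof. by rewrite /sw => /negbTE -> /negbTE ->. Qed.

Lemma swK (T : eqType) (a b : T) : involutive (sw a b).
Proof.
move=> i.
case: (eqVneq i a) => [->|ia]; first by rewrite swa swb.
case: (eqVneq i b) => [->|ib]; first by rewrite swb swa.
by rewrite !swo.
Qed.

Lemma sw_in (T : finType) (K : {set T}) a b i : a \in K -> b \in K -> i \in K -> sw a b i \in K.
Proof. by rewrite /sw => aK bK iK; case: ifP => // _; case: ifP. Qed.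

Lemma Bsym (RR : comNzRingType) (T : finType) (K : {set T}) (s : nat) (z : T -> RR) a b :
  a \in K -> b \in K -> a != b ->
  \sum_(S : {set T} | (S \subset K) && (#|S| == s) && (a \in S) && (b \notin S)) \prod_(i in S :\ a) z i =
  \sum_(S : {set T} | (S \subset K) && (#|S| == s) && (a \notin S) && (b \in S)) \prod_(i in S :\ b) z i.
Proof.
move=> aK bK ab.
have hc : cancel (fun S : {set T} => sw a b @^-1: S) (fun S : {set T} => sw a b @^-1: S).
  by move=> S; apply/setP => i; rewrite !inE swK.
have hinj := can_inj hc.
rewrite [RHS](reindex_inj hinj) /=.
apply: eq_big => S.
  rewrite !inE swa swb card_preimset; last exact: (can_inj (swK a b)).
  have -> : (sw a b @^-1: S \subset K) = (S \subset K).
    apply/subsetP/subsetP => H i.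
      move=> iS; rewrite -(swK a b i); apply: sw_in => //; apply: H.
      by rewrite inE swK.
    rewrite inE => /H swi; rewrite -(swK a b i); exact: sw_in.
  by rewrite -!andbA; congr (_ && (_ && _)); rewrite andbC.
move=> /andP[/andP[_ aS] bS].
apply: eq_bigl => i; rewrite !inE.
case: (eqVneq i a) => [->|ia]; first by rewrite swa (negbTE bS) andbF.
case: (eqVneq i b) => [->|ib]; first by rewrite (negbTE bS).
by rewrite swo.
Qed.

Definition Esym (RR : comNzRingType) (T : finType) (K : {set T}) (s : nat) (z : T -> RR) : RR :=
  \sum_(S : {set T} | (S \subset K) && (#|S| == s)) \prod_(i in S) z i.

Lemma Esym_decomp (RR : comNzRingType) (T : finType) (K : {set T}) (s : nat) (z : T -> RR) a b :
  a \in K -> b \in K -> a != b ->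
  Esym K s z =
   \sum_(S : {set T} | (S \subset K) && (#|S| == s) && (a \notin S) && (b \notin S)) \prod_(i in S) z i
 + (z a + z b) * \sum_(S : {set T} | (S \subset K) && (#|S| == s) && (a \in S) && (b \notin S)) \prod_(i in S :\ a) z i
 + z a * z b * \sum_(S : {set T} | (S \subset K) && (#|S| == s) && (a \in S) && (b \in S)) \prod_(i in S :\ a :\ b) z i.
Proof.
move=> aK bK ab.
rewrite /Esym (@decomp4 _ _ (fun S : {set T} => (S \subset K) && (#|S| == s)) a b z ab) /=.
rewrite -(@Bsym _ _ K s z a b aK bK ab); ring.
Qed.

Lemma mac_ind (RR : realFieldType) (T : finType) (K : {set T}) (s : nat) (mu : RR) :
  forall m (x : T -> RR), (#|[set i in K | x i != mu]| <= m)%N ->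
  (forall i, i \in K -> 0 <= x i) -> \sum_(i in K) x i = #|K|%:R * mu ->
  Esym K s x <= 'C(#|K|, s)%:R * mu ^+ s.
Proof.
elim=> [|m IH] x hm x0 hsum.
- have allmu : forall i, i \in K -> x i = mu.
    move=> i iK; apply/eqP; apply: contraTT hm => ne; rewrite -ltnNge.
    by apply/card_gt0P; exists i; rewrite inE iK.
  rewrite /Esym.
  have -> : \sum_(S : {set T} | (S \subset K) && (#|S| == s)) \prod_(i in S) x i =
      \sum_(S in [set S : {set T} | S \subset K & #|S| == s]) mu ^+ s.
    apply: eq_big => S; first by rewrite inE.
    move=> /andP[/subsetP SK /eqP <-]; rewrite -prodr_const.
    by apply: eq_bigr => i iS; rewrite allmu //; apply: SK.
  by rewrite sumr_const cards_draws mulr_natl.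
- have [allmu|] := boolP [forall i in K, x i == mu].
  + apply: (IH x) => //.
    have -> : [set i in K | x i != mu] = set0.
      apply/setP => i; rewrite !inE; apply/andP => -[iK /negP []].
      exact: (forall_inP allmu).
    by rewrite cards0.
  move=> /forall_inPn [j jK xj].
  have hz : \sum_(i in K) (x i - mu) = 0.
    by rewrite sumrB hsum sumr_const mulr_natl subrr.
  have [a aK xa] : exists2 a, a \in K & x a < mu.
    apply/exists_inP; apply: contraR xj => /exists_inPn H.
    have H' : forall i, i \in K -> 0 <= x i - mu by move=> i iK; rewrite subr_ge0 leNgt H.
    by rewrite -subr_eq0 (psumr_eq0P H' hz).
  have [b bK xb] : exists2 b, b \in K & mu < x b.
    apply/exists_inP; apply: contraR xj => /exists_inPn H.
    have H' : forall i, i \in K -> 0 <= mu - x i by move=> i iK; rewrite subr_ge0 leNgt H.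
    have hz' : \sum_(i in K) (mu - x i) = 0.
      by rewrite sumrB hsum sumr_const mulr_natl subrr.
    by rewrite eq_sym -subr_eq0 (psumr_eq0P H' hz').
  have ab : a != b by apply: contraTneq xa => ->; rewrite -leNgt ltW.
  pose y := fun i => if i == a then mu else if i == b then x a + x b - mu else x i.
  have ya : y a = mu by rewrite /y eqxx.
  have yb : y b = x a + x b - mu by rewrite /y eq_sym (negbTE ab) eqxx.
  have yo : forall i, i != a -> i != b -> y i = x i.
    by move=> i /negbTE ia /negbTE ib; rewrite /y ia ib.
  have mu0 : 0 <= mu by apply: le_trans (ltW xa); apply: x0.
  have xa0 := x0 a aK.
  have Hy : Esym K s y <= 'C(#|K|, s)%:R * mu ^+ s.
    apply: IH.
    + have sub : [set i in K | y i != mu] \subset [set i in K | x i != mu] :\ a.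
        apply/subsetP => i; rewrite !inE => /andP[iK yi].
        case: (eqVneq i a) => [ia|ia]; first by move: yi; rewrite ia ya eqxx.
        case: (eqVneq i b) => [ib|ib].
          by rewrite ib bK (gt_eqF xb).
        by rewrite iK -(yo i ia ib) yi.
      have := subset_leq_card sub.
      move=> h1; apply: leq_trans h1 _.
      have := cardsD1 a [set i in K | x i != mu]; rewrite inE aK (lt_eqF xa) /= add1n => h2.
      by rewrite -ltnS -h2.
    + move=> i iK; case: (eqVneq i a) => [->|ia]; first by rewrite ya.
      case: (eqVneq i b) => [->|ib]; first by rewrite yb -addrA; apply: addr_ge0 => //; rewrite subr_ge0 ltW.
      by rewrite yo //; apply: x0.
    + rewrite -hsum (bigD1 a) //= [RHS](bigD1 a) //=.
      rewrite (bigD1 b) /=; last by rewrite bK eq_sym.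
      rewrite [in RHS](bigD1 b) /=; last by rewrite bK eq_sym.
      rewrite ya yb (eq_bigr x); first by ring.
      by move=> i /andP[/andP[_ ia] ib]; rewrite yo.
  apply: le_trans Hy.
  rewrite (@Esym_decomp _ _ K s x a b aK bK ab) (@Esym_decomp _ _ K s y a b aK bK ab).
  set D1 := \sum_(S : {set T} | _ && (a \in S) && (b \in S)) \prod_(i in S :\ a :\ b) y i.
  set D0 := \sum_(S : {set T} | _ && (a \in S) && (b \in S)) \prod_(i in S :\ a :\ b) x i.
  set B1 := \sum_(S : {set T} | _ && (a \in S) && (b \notin S)) \prod_(i in S :\ a) y i.
  set B0 := \sum_(S : {set T} | _ && (a \in S) && (b \notin S)) \prod_(i in S :\ a) x i.
  set A1 := \sum_(S : {set T} | _ && (a \notin S) && (b \notin S)) \prod_(i in S) y i.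
  set A0 := \sum_(S : {set T} | _ && (a \notin S) && (b \notin S)) \prod_(i in S) x i.
  have eA : A1 = A0.
    apply: eq_bigr => S /andP[/andP[_ aS] bS]; apply: eq_bigr => i iS.
    by apply: yo; [apply: contraNneq aS => <- | apply: contraNneq bS => <-].
  have eB : B1 = B0.
    apply: eq_bigr => S /andP[/andP[_ aS] bS]; apply: eq_bigr => i.
    rewrite in_setD1 => /andP[ia iS].
    by apply: yo => //; apply: contraNneq bS => <-.
  have eD : D1 = D0.
    apply: eq_bigr => S _; apply: eq_bigr => i.
    by rewrite !in_setD1 => /andP[ib /andP[ia _]]; apply: yo.
  have D0ge : 0 <= D0.
    apply: sumr_ge0 => S /andP[/andP[/andP[/subsetP SK _] _] _].
    apply: prodr_ge0 => i; rewrite !in_setD1 => /andP[_ /andP[_ iS]].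
    by apply: x0; apply: SK.
  rewrite eA eB eD ya yb.
  have h : 0 <= (mu - x a) * (x b - mu) * D0.
    by apply: mulr_ge0 => //; apply: mulr_ge0; rewrite subr_ge0 ltW.
  rewrite -subr_ge0; apply: le_trans h _; rewrite le_eqVlt; apply/orP; left; apply/eqP; ring.
Qed.

Lemma maclaurin (RR : realFieldType) (T : finType) (K : {set T}) (s : nat) (x : T -> RR) :
  (0 < #|K|)%N -> (forall i, i \in K -> 0 <= x i) ->
  Esym K s x * #|K|%:R ^+ s <= 'C(#|K|, s)%:R * (\sum_(i in K) x i) ^+ s.
Proof.
move=> K0 x0.
have k0 : (#|K|%:R : RR) != 0 by rewrite pnatr_eq0 -lt0n.
pose mu := (\sum_(i in K) x i) / #|K|%:R.
have hs : \sum_(i in K) x i = #|K|%:R * mu by rewrite /mu mulrC divfK.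
have := @mac_ind RR T K s mu #|T| x (max_card _) x0 hs.
rewrite hs => H; rewrite exprMn mulrCA [X in X <= _]mulrC; apply: ler_wpM2l => //.
by apply: exprn_ge0; rewrite ler0n.
Qed.

Close Scope ring_scope.

Lemma ffratio k r s : k <= r -> k ^_ s * r ^ s <= r ^_ s * k ^ s.
Proof.
move=> kr; elim: s => [|s IH]; first by rewrite !ffactn0 !expn0.
rewrite !ffactnSr !expnSr.
have h : (k - s) * r <= (r - s) * k.
  by rewrite !mulnBl mulnC leq_sub2l // leq_mul2l kr orbT.
have := leq_mul IH h.
by rewrite mulnACA [X in _ <= X]mulnACA.
Qed.

Lemma binratio k r s : k <= r -> 'C(k, s) * r ^ s <= 'C(r, s) * k ^ s.
Proof.
move=> kr; rewrite -(leq_pmul2r (fact_gt0 s)) mulnAC bin_ffact [X in _ <= X]mulnAC bin_ffact.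
exact: ffratio.
Qed.

Open Scope ring_scope.

Definition Pc (RR : comNzRingType) n (e : rel 'I_n) s (z : 'I_n -> RR) : RR :=
  \sum_(S : {set 'I_n} | (#|S| == s) && is_clique e S) \prod_(i in S) z i.
Definition supp (RR : comNzRingType) n (z : 'I_n -> RR) : {set 'I_n} := [set i | z i != 0].

Lemma prod0 (RR : comNzRingType) (T : finType) (S A : {set T}) (z : T -> RR) :
  (forall i, i \notin A -> z i = 0) -> ~~ (S \subset A) -> \prod_(i in S) z i = 0.
Proof.
move=> hz /subsetPn [i iS iA]; rewrite (bigD1 i) //= hz // mul0r //.
Qed.

Lemma clique_sub n (e : rel 'I_n) (K S : {set 'I_n}) :
  is_clique e K -> S \subset K -> is_clique e S.
Proof.
move=> /forall_inP cK /subsetP SK; apply/forall_inP => x xS; apply/forall_inP => y yS.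
by have /forall_inP := cK x (SK x xS); apply; apply: SK.
Qed.

Lemma sum_supp (RR : comNzRingType) n (z : 'I_n -> RR) :
  \sum_i z i = \sum_(i in supp z) z i.
Proof.
rewrite (bigID (mem (supp z))) /= [X in _ + X]big1 ?addr0 //.
by move=> i; rewrite inE negbK => /eqP.
Qed.

Lemma W_clique (RR : realFieldType) n (e : rel 'I_n) (r s : nat) (z : 'I_n -> RR) :
  (0 < r)%N -> (0 < s)%N -> (forall i, 0 <= z i) ->
  (forall S, is_clique e S -> S \subset supp z -> (#|S| <= r)%N) ->
  is_clique e (supp z) ->
  Pc e s z * r%:R ^+ s <= 'C(r, s)%:R * (\sum_i z i) ^+ s.
Proof.
move=> r0 s0 z0 hcl cK.
set K := supp z.
have zK : forall i, i \notin K -> z i = 0 by move=> i; rewrite inE negbK => /eqP.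
have PE : Pc e s z = Esym K s z.
  rewrite /Pc /Esym (bigID (fun S : {set 'I_n} => S \subset K)) /=.
  rewrite [X in _ + X]big1 ?addr0; last first.
    by move=> S /andP[_ SK]; apply: (prod0 zK).
  apply: eq_bigl => S; apply/idP/idP.
    by move=> /andP[/andP[-> _] ->].
  by move=> /andP[SK ->]; rewrite SK (clique_sub cK SK).
have sumE := sum_supp z; rewrite -/K in sumE.
have sum0 : 0 <= \sum_i z i by apply: sumr_ge0.
have kr : (#|K| <= r)%N by apply: hcl.
have [k0|kpos] := posnP #|K|.
  rewrite PE /Esym big_pred0 ?mul0r; first by apply: mulr_ge0 => //; apply: exprn_ge0.
  move=> S; apply/negP => /andP[SK /eqP Ss].
  have : (#|S| <= #|K|)%N by apply: subset_leq_card.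
  by rewrite k0 Ss leqn0 => /eqP Hs; move: s0; rewrite Hs.
have kp : (0 : RR) < #|K|%:R ^+ s by apply: exprn_gt0; rewrite ltr0n.
rewrite -(ler_pM2r kp) PE.
have M := @maclaurin RR _ K s z kpos (fun i _ => z0 i).
rewrite -sumE in M.
have Rn : ('C(#|K|, s) * r ^ s <= 'C(r, s) * #|K| ^ s)%N by apply: binratio.
have Rr : ('C(#|K|, s)%:R * r%:R ^+ s : RR) <= 'C(r, s)%:R * #|K|%:R ^+ s.
  by rewrite -!natrX -!natrM ler_nat.
have sp : 0 <= (\sum_i z i) ^+ s by apply: exprn_ge0.
have rp : (0 : RR) <= r%:R ^+ s by apply: exprn_ge0; rewrite ler0n.
have h1 : Esym K s z * r%:R ^+ s * #|K|%:R ^+ s <=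
    'C(#|K|, s)%:R * (\sum_i z i) ^+ s * r%:R ^+ s.
  by rewrite mulrAC; exact: (ler_wpM2r rp M).
have h2 : 'C(#|K|, s)%:R * (\sum_i z i) ^+ s * r%:R ^+ s <=
    'C(r, s)%:R * #|K|%:R ^+ s * (\sum_i z i) ^+ s.
  by rewrite mulrAC; exact: (ler_wpM2r sp Rr).
apply: le_trans h1 (le_trans h2 _).
by rewrite mulrAC.
Qed.

Lemma sum_pair (RR : comNzRingType) (T : finType) (u v : T) (y z : T -> RR) :
  u != v -> (forall i, i != u -> i != v -> y i = z i) -> y u + y v = z u + z v ->
  \sum_i y i = \sum_i z i.
Proof.
move=> uv ho hp.
rewrite (bigD1 u) //= [RHS](bigD1 u) //= (bigD1 v) 1?eq_sym //= [in RHS](bigD1 v) 1?eq_sym //=.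
rewrite !addrA hp; congr (_ + _).
by apply: eq_bigr => i /andP[iu iv]; apply: ho.
Qed.

Lemma Pc_decomp (RR : comNzRingType) n (e : rel 'I_n) s (z : 'I_n -> RR) u v :
  u != v -> ~~ e u v ->
  Pc e s z =
   \sum_(S : {set 'I_n} | ((#|S| == s) && is_clique e S) && (u \notin S) && (v \notin S)) \prod_(i in S) z i
 + z u * \sum_(S : {set 'I_n} | ((#|S| == s) && is_clique e S) && (u \in S) && (v \notin S)) \prod_(i in S :\ u) z i
 + z v * \sum_(S : {set 'I_n} | ((#|S| == s) && is_clique e S) && (u \notin S) && (v \in S)) \prod_(i in S :\ v) z i.
Proof.
move=> uv nuv.
rewrite /Pc (@decomp4 _ _ (fun S : {set 'I_n} => (#|S| == s) && is_clique e S) u v z uv) /=.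
have -> : \sum_(S : {set 'I_n} | ((#|S| == s) && is_clique e S) && (u \in S) && (v \in S)) \prod_(i in S :\ u :\ v) z i = 0.
  apply: big_pred0 => S; apply/negP => /andP[/andP[/andP[_ cl] uS] vS].
  by have /forall_inP := forall_inP cl u uS => /(_ v vS); rewrite uv /= (negbTE nuv).
by rewrite mulr0 addr0.
Qed.

Lemma W_ind (RR : realFieldType) n (e : rel 'I_n) (r s : nat) :
  (0 < r)%N -> (0 < s)%N -> forall m (z : 'I_n -> RR), (#|supp z| <= m)%N ->
  (forall i, 0 <= z i) ->
  (forall S, is_clique e S -> S \subset supp z -> (#|S| <= r)%N) ->
  Pc e s z * r%:R ^+ s <= 'C(r, s)%:R * (\sum_i z i) ^+ s.
Proof.
move=> r0 s0; elim=> [|m IH] z hm z0 hcl.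
  apply: W_clique => //.
  move: hm; rewrite leqn0 cards_eq0 => /eqP ->.
  by apply/forall_inP => x; rewrite inE.
have [cK|ncK] := boolP (is_clique e (supp z)); first exact: W_clique.
move: ncK => /forall_inPn [u uS /forall_inPn [v vS]].
rewrite negb_imply => /andP[uv nuv].
have zo : forall i, i \notin supp z -> z i = 0 by move=> i; rewrite inE negbK => /eqP.
pose y1 := fun i => if i == u then z u + z v else if i == v then 0 else z i.
pose y2 := fun i => if i == u then 0 else if i == v then z u + z v else z i.
have y1u : y1 u = z u + z v by rewrite /y1 eqxx.
have y1v : y1 v = 0 by rewrite /y1 eq_sym (negbTE uv) eqxx.
have y2u : y2 u = 0 by rewrite /y2 eqxx.
have y2v : y2 v = z u + z v by rewrite /y2 eq_sym (negbTE uv) eqxx.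
have y1o : forall i, i != u -> i != v -> y1 i = z i.
  by move=> i /negbTE iu /negbTE iv; rewrite /y1 iu iv.
have y2o : forall i, i != u -> i != v -> y2 i = z i.
  by move=> i /negbTE iu /negbTE iv; rewrite /y2 iu iv.
have zuv : 0 <= z u + z v by apply: addr_ge0.
have y10 : forall i, 0 <= y1 i.
  by move=> i; rewrite /y1; case: ifP => // _; case: ifP.
have y20 : forall i, 0 <= y2 i.
  by move=> i; rewrite /y2; case: ifP => // _; case: ifP.
have s1 : \sum_i y1 i = \sum_i z i by apply: (sum_pair uv y1o); rewrite y1u y1v addr0.
have s2 : \sum_i y2 i = \sum_i z i by apply: (sum_pair uv y2o); rewrite y2u y2v add0r.
have sub1 : supp y1 \subset supp z :\ v.
  apply/subsetP => i; rewrite !inE.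
  case: (eqVneq i v) => [->|iv]; first by rewrite y1v eqxx.
  case: (eqVneq i u) => [->|iu] hy; first by move: uS; rewrite inE.
  by rewrite -(y1o i iu iv).
have sub2 : supp y2 \subset supp z :\ u.
  apply/subsetP => i; rewrite !inE.
  case: (eqVneq i u) => [->|iu]; first by rewrite y2u eqxx.
  case: (eqVneq i v) => [->|iv] hy; first by move: vS; rewrite inE.
  by rewrite -(y2o i iu iv).
have c1 : (#|supp y1| <= m)%N.
  apply: leq_trans (subset_leq_card sub1) _.
  by have := cardsD1 v (supp z); rewrite vS add1n => h; rewrite -ltnS -h.
have c2 : (#|supp y2| <= m)%N.
  apply: leq_trans (subset_leq_card sub2) _.
  by have := cardsD1 u (supp z); rewrite uS add1n => h; rewrite -ltnS -h.
have h1 : forall S, is_clique e S -> S \subset supp y1 -> (#|S| <= r)%N.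
  move=> S cS Ss; apply: hcl => //; apply: subset_trans Ss (subset_trans sub1 _).
  exact: subD1set.
have h2 : forall S, is_clique e S -> S \subset supp y2 -> (#|S| <= r)%N.
  move=> S cS Ss; apply: hcl => //; apply: subset_trans Ss (subset_trans sub2 _).
  exact: subD1set.
have IH1 := IH y1 c1 y10 h1; rewrite s1 in IH1.
have IH2 := IH y2 c2 y20 h2; rewrite s2 in IH2.
have rp : (0 : RR) <= r%:R ^+ s by apply: exprn_ge0; rewrite ler0n.
have dz := Pc_decomp s z uv nuv.
have d1 := Pc_decomp s y1 uv nuv.
have d2 := Pc_decomp s y2 uv nuv.
set A := \sum_(S : {set 'I_n} | _ && (u \notin S) && (v \notin S)) \prod_(i in S) z i in dz.
set Bu := \sum_(S : {set 'I_n} | _ && (u \in S) && (v \notin S)) \prod_(i in S :\ u) z i in dz.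
set Bv := \sum_(S : {set 'I_n} | _ && (u \notin S) && (v \in S)) \prod_(i in S :\ v) z i in dz.
have loc : forall y : 'I_n -> RR, (forall i, i != u -> i != v -> y i = z i) ->
   Pc e s y = A + y u * Bu + y v * Bv.
  move=> y yo; rewrite (Pc_decomp s y uv nuv); congr (_ + _ * _ + _ * _).
  - apply: eq_bigr => S /andP[/andP[_ uS'] vS']; apply: eq_bigr => i iS.
    by apply: yo; [apply: contraNneq uS' => <- | apply: contraNneq vS' => <-].
  - apply: eq_bigr => S /andP[/andP[_ uS'] vS']; apply: eq_bigr => i.
    rewrite in_setD1 => /andP[iu iS].
    by apply: yo => //; apply: contraNneq vS' => <-.
  - apply: eq_bigr => S /andP[/andP[_ uS'] vS']; apply: eq_bigr => i.
    rewrite in_setD1 => /andP[iv iS].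
    by apply: yo => //; apply: contraNneq uS' => <-.
have zu0 := z0 u; have zv0 := z0 v.
have [BB|BB] := lerP Bv Bu.
  apply: le_trans IH1; apply: ler_wpM2r => //.
  rewrite dz (loc y1 y1o) y1u y1v.
  rewrite -subr_ge0.
  have -> : A + (z u + z v) * Bu + 0 * Bv - (A + z u * Bu + z v * Bv) = z v * (Bu - Bv) by ring.
  by apply: mulr_ge0 => //; rewrite subr_ge0.
apply: le_trans IH2; apply: ler_wpM2r => //.
rewrite dz (loc y2 y2o) y2u y2v.
rewrite -subr_ge0.
have -> : A + 0 * Bu + (z u + z v) * Bv - (A + z u * Bu + z v * Bv) = z u * (Bv - Bu) by ring.
by apply: mulr_ge0 => //; rewrite subr_ge0 ltW.
Qed.

Close Scope ring_scope.

Lemma zykov_nat n (e : rel 'I_n) (A : {set 'I_n}) r s :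
  0 < r -> 0 < s -> (forall S, is_clique e S -> S \subset A -> #|S| <= r) ->
  #|[set S : {set 'I_n} | (#|S| == s) && is_clique e S && (S \subset A)]| * r ^ s
    <= 'C(r, s) * #|A| ^ s.
Proof.
move=> r0 s0 hcl.
pose x := fun i : 'I_n => (if i \in A then 1%R else 0%R : rat).
have sx : supp x = A by apply/setP => i; rewrite inE /x; case: (i \in A).
have := @W_ind rat n e r s r0 s0 n x (leq_trans (max_card _) (eq_leq (card_ord n))).
have x0 : forall i, (0 <= x i)%R by move=> i; rewrite /x; case: (i \in A).
rewrite sx => /(_ x0 hcl).
have -> : Pc e s x = (#|[set S : {set 'I_n} | (#|S| == s) && is_clique e S && (S \subset A)]|%:R : rat).
  rewrite /Pc (eq_bigr (fun S : {set 'I_n} => if S \subset A then 1%R else 0%R : rat)); last first.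
    move=> S _; case: ifP => SA.
      by apply: big1 => i iS; rewrite /x (subsetP SA i iS).
    apply: (@prod0 _ _ S A) => [i|]; first by rewrite /x => /negbTE ->.
    by rewrite SA.
  rewrite -big_mkcondr /= -sumr_const; apply: eq_bigl => S; by rewrite inE.
have -> : (\sum_i x i)%R = (#|A|%:R : rat).
  by rewrite /x -big_mkcond /= sumr_const.
by rewrite -!natrX -!natrM ler_nat.
Qed.

Lemma dbl n (e : rel 'I_n) t : 0 < t -> simple_graph e ->
  t * k_t t e <= \sum_v #|[set T : {set 'I_n} | (#|T| == t.-1) && is_clique e T && (T \subset [set y | e v y])]|.
Proof.
move=> t0 [esym eirr].
set Kt := [set S : {set 'I_n} | (#|S| == t) && is_clique e S].
have e1 : t * k_t t e = \sum_(S in Kt) \sum_v (if v \in S then 1 else 0).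
  rewrite /k_t -/Kt mulnC -sum_nat_const; apply: eq_bigr => S.
  rewrite inE => /andP[/eqP St _]; by rewrite -big_mkcond /= sum1_card St.
rewrite e1 exchange_big /=; apply: leq_sum => v _.
rewrite -big_mkcondr /=.
have -> : \sum_(S in Kt | v \in S) 1 = #|[set S in Kt | v \in S]|.
  by rewrite -sum1_card; apply: eq_bigl => S; rewrite !inE.
set X := [set S in Kt | v \in S].
have inj : {in X &, injective (fun S : {set 'I_n} => S :\ v)}.
  move=> S1 S2; rewrite !inE => /andP[_ v1] /andP[_ v2] E.
  by rewrite -(setD1K v1) -(setD1K v2) E.
rewrite -(card_in_imset inj); apply: subset_leq_card.
apply/subsetP => T /imsetP [S]; rewrite !inE => /andP[/andP[/eqP St cS] vS] ->.
have cT : is_clique e (S :\ v) by apply: (clique_sub cS); apply: subD1set.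
rewrite cT andbT; apply/andP; split.
  by have := cardsD1 v S; rewrite vS St add1n => ->.
apply/subsetP => y; rewrite !inE => /andP[yv yS].
have /forall_inP := forall_inP cS v vS.
by move=> /(_ y yS); rewrite eq_sym yv.
Qed.

Lemma upper_nat n (e : rel 'I_n) t omega Delta : 2 <= t -> t <= omega ->
  simple_graph e -> in_class Delta omega e ->
  t * k_t t e * omega.-1 ^ t.-1 <= n * 'C(omega.-1, t.-1) * Delta ^ t.-1.
Proof.
move=> t2 tw [esym eirr] [hdeg hcl].
have r0 : 0 < omega.-1 by rewrite -ltnS prednK; [apply: leq_trans tw | apply: leq_trans tw; apply: ltnW].
have s0 : 0 < t.-1 by rewrite -ltnS prednK //; apply: ltnW.
apply: leq_trans (_ : (\sum_v #|[set T : {set 'I_n} | (#|T| == t.-1) && is_clique e T && (T \subset [set y | e v y])]|) * omega.-1 ^ t.-1 <= _).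
  by rewrite leq_mul2r (@dbl n e t (ltnW t2) (conj esym eirr)) ?orbT.
rewrite big_distrl /=.
apply: leq_trans (_ : \sum_(v : 'I_n) 'C(omega.-1, t.-1) * Delta ^ t.-1 <= _); last first.
  by rewrite sum_nat_const card_ord mulnA.
apply: leq_sum => v _.
apply: leq_trans (@zykov_nat n e [set y | e v y] _ _ r0 s0 _) _.
  move=> S cS /subsetP SN.
  have vS : v \notin S by apply/negP => /SN; rewrite inE eirr.
  have cvS : is_clique e (v |: S).
    apply/forall_inP => x; rewrite in_setU1 => /orP [/eqP -> | xS]; apply/forall_inP => y;
      rewrite in_setU1 => /orP [/eqP -> | yS]; apply/implyP => xy.
    - by rewrite eqxx in xy.
    - by have := SN y yS; rewrite inE.
    - by have := SN x xS; rewrite inE esym.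
    - by have /forall_inP := forall_inP cS x xS => /(_ y yS); rewrite xy.
  have := hcl _ cvS; rewrite cardsU1 vS add1n => h.
  by rewrite -ltnS prednK //; apply: leq_trans tw; apply: ltnW.
by rewrite leq_mul2l leq_exp2r ?hdeg ?orbT.
Qed.

Lemma turan_simple n omega : simple_graph (turan_rel n omega).
Proof. by split=> [i j|i]; rewrite /turan_rel ?eqxx // eq_sym. Qed.

Lemma turan_clique n omega (S : {set 'I_n}) : 0 < omega ->
  is_clique (turan_rel n omega) S -> #|S| <= omega.
Proof.
move=> w0 cS.
pose h := fun i : 'I_n => (Ordinal (ltn_pmod i w0) : 'I_omega).
have inj : {in S &, injective h}.
  move=> i j iS jS /(congr1 val) /= /eqP hij; apply/eqP; apply: contraTT hij => ij.
  by have /forall_inP := forall_inP cS i iS => /(_ j jS); rewrite ij.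
rewrite -(card_in_imset inj); apply: leq_trans (max_card _) _; by rewrite card_ord.
Qed.

Lemma gbound n omega q (H : omega * q <= n) (c : 'I_omega) (k : 'I_q) : c + omega * k < n.
Proof.
apply: leq_trans H; have := ltn_ord k; have := ltn_ord c => hc hk.
apply: leq_trans (_ : omega * k.+1 <= _); last by rewrite leq_mul2l hk orbT.
by rewrite mulnS ltn_add2r.
Qed.

Lemma gmod (omega k : nat) (c : 'I_omega) : (c + omega * k) %% omega = c.
Proof. by rewrite addnC mulnC modnMDl modn_small. Qed.

Lemma gdiv (omega k : nat) (c : 'I_omega) : (c + omega * k) %/ omega = k.
Proof.
have w0 : 0 < omega by apply: leq_ltn_trans (ltn_ord c).
by rewrite addnC mulnC divnMDl // divn_small // addn0.
Qed.

Lemma turan_deg n omega q (i : 'I_n) : 0 < omega -> omega * q <= n ->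
  deg (turan_rel n omega) i <= n - q.
Proof.
move=> w0 H.
set Y := [set j : 'I_n | i %% omega == j %% omega].
have cY : q <= #|Y|.
  pose c : 'I_omega := Ordinal (ltn_pmod i w0).
  pose g := fun k : 'I_q => (Ordinal (gbound H c k) : 'I_n).
  have ginj : injective g.
    move=> k1 k2 /(congr1 val) /= /addnI /eqP; rewrite eqn_pmul2l // => /eqP.
    exact: val_inj.
  have := card_imset [set: 'I_q] ginj; rewrite cardsT card_ord => <-.
  apply: subset_leq_card; apply/subsetP => j /imsetP [k _ ->].
  by rewrite inE /= addnC mulnC modnMDl modn_mod.
have : #|Y| + #|~: Y| = n by rewrite cardsC card_ord.
rewrite /deg.
have -> : [set y | turan_rel n omega i y] = ~: Y by apply/setP => y; rewrite !inE.
move=> hn; move: hn cY; move: #|Y| #|~: Y| => a b <- qa.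
by rewrite addnC -addnBA // leq_addr.
Qed.

Lemma turan_lower n omega t q : 0 < omega -> omega * q.+1 <= n ->
  'C(omega, t) * q.+1 ^ t <= k_t t (turan_rel n omega).
Proof.
move=> w0 H.
pose g := fun (c : 'I_omega) (k : 'I_q.+1) => (Ordinal (gbound H c k) : 'I_n).
have gE : forall c k c' k', g c k = g c' k' -> c = c' /\ k = k'.
  move=> c k c' k' /(congr1 val) /= E; split; apply: val_inj.
    by have := congr1 (modn^~ omega) E; rewrite /= !gmod.
  by have := congr1 (divn^~ omega) E; rewrite /= !gdiv.
pose Dt := ({set 'I_omega} * {ffun 'I_omega -> 'I_q.+1})%type.
pose D := [set p : Dt | (#|p.1| == t) && (p.2 \in pffun_on ord0 p.1 [set: 'I_q.+1])].
pose Phi := fun p : Dt => [set g c (p.2 c) | c in p.1].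
have cD : #|D| = 'C(omega, t) * q.+1 ^ t.
  rewrite -sum1_card.
  rewrite (eq_bigl (fun p : Dt => (#|p.1| == t) && (p.2 \in pffun_on ord0 p.1 [set: 'I_q.+1]))); last first.
    by move=> p; rewrite inE.
  rewrite -(pair_big_dep (fun R : {set 'I_omega} => #|R| == t)
     (fun R f => f \in pffun_on ord0 R [set: 'I_q.+1]) (fun _ _ => 1)) /=.
  rewrite (eq_bigr (fun _ => q.+1 ^ t)); last first.
    move=> R /eqP Rt; rewrite sum1_card card_pffun_on cardsT card_ord Rt //.
  rewrite sum_nat_const; congr (_ * _).
  have -> : #|(fun R : {set 'I_omega} => #|R| == t)| = #|[set A : {set 'I_omega} | #|A| == t]|.
    by apply: eq_card => R; rewrite inE.
  by rewrite card_draws card_ord.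
have PhiC : forall p, p \in D -> Phi p \in [set S : {set 'I_n} | (#|S| == t) && is_clique (turan_rel n omega) S].
  move=> [R f]; rewrite !inE /= => /andP[/eqP Rt _].
  have inj : {in R &, injective (fun c => g c (f c))}.
    by move=> c c' _ _ /gE [].
  rewrite /Phi /= (card_in_imset inj) Rt eqxx /=.
  apply/forall_inP => x /imsetP [c cR ->]; apply/forall_inP => y /imsetP [c' cR' ->].
  apply/implyP => ne; rewrite /turan_rel /= !gmod.
  by apply: contraNneq ne => /val_inj ->.
have Pinj : {in D &, injective Phi}.
  move=> [R1 f1] [R2 f2]; rewrite !inE /= => /andP[_ /pffun_onP [s1 _]] /andP[_ /pffun_onP [s2 _]] E.
  have key : forall (R R' : {set 'I_omega}) (f f' : {ffun 'I_omega -> 'I_q.+1}), [set g c (f c) | c in R] = [set g c (f' c) | c in R'] ->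
      forall c, c \in R -> c \in R' /\ f c = f' c.
    move=> R R' f f' E' c cR.
    have : g c (f c) \in [set g c (f' c) | c in R'] by rewrite -E'; apply: imset_f.
    by move=> /imsetP [c' cR' /gE [ec ek]]; subst c'; split.
  have e1 := key _ _ _ _ E; have e2 := key _ _ _ _ (esym E).
  have RR : R1 = R2.
    by apply/setP => c; apply/idP/idP => [/e1 [] | /e2 []].
  subst R2; congr (_, _); apply/ffunP => c.
  have [cR|cR] := boolP (c \in R1); first by have [_] := e1 c cR.
  have z1 : f1 c = ord0.
    by apply/eqP; apply: contraNT cR => ne; apply: (subsetP s1); rewrite inE.
  have z2 : f2 c = ord0.
    by apply/eqP; apply: contraNT cR => ne; apply: (subsetP s2); rewrite inE.
  by rewrite z1 z2.
rewrite -cD -(card_in_imset Pinj) /k_t; apply: subset_leq_card.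
by apply/subsetP => S /imsetP [p pD ->]; apply: PhiC.
Qed.

Lemma leq_expl m1 m2 k : m1 <= m2 -> m1 ^ k <= m2 ^ k.
Proof. by move=> h; elim: k => // k IH; rewrite !expnS leq_mul. Qed.

Lemma bern_nat q t : (q + 1) ^ t * (q + 1 - t) <= q ^ t * (q + 1).
Proof.
elim: t => [|t IH]; first by rewrite !expn0 !mul1n subn0.
have h : (q + 1) * (q + 1 - t.+1) <= q * (q + 1 - t).
  case: (leqP t q) => tq.
    by rewrite addn1 subSS subSn // mulSn mulnS leq_add2r leq_subr.
  by rewrite addn1 subSS (_ : q - t = 0) ?muln0 //; apply/eqP; rewrite subn_eq0 ltnW.
apply: leq_trans (_ : (q + 1) ^ t * (q * (q + 1 - t)) <= _).
  by rewrite expnSr -mulnA leq_mul2l h orbT.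
by rewrite expnS mulnCA -mulnA leq_mul2l IH orbT.
Qed.

Lemma lower_nat t omega Delta k : 2 <= t -> t <= omega ->
  'C(omega, t) * (Delta %/ omega.-1) ^ t <= k ->
  (Delta + Delta %/ omega.-1) * 'C(omega.-1, t.-1) * Delta ^ t.-1 * (Delta %/ omega.-1 + 1 - t)
   <= k * t * omega.-1 ^ t.-1 * (Delta %/ omega.-1 + 1).
Proof.
move=> t2 tw hk.
set r := omega.-1; set s := t.-1; set q := Delta %/ r.
have ht : t = s.+1 by rewrite /s prednK //; apply: ltnW.
have hw : omega = r.+1 by rewrite /r prednK //; apply: leq_trans tw; apply: ltnW.
have r0 : 0 < r by rewrite -ltnS -hw; apply: leq_trans tw.
have bd : omega * 'C(r, s) = t * 'C(omega, t).
  by rewrite ht hw -mul_bin_diag.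
have hD : Delta <= r * (q + 1).
  rewrite {1}(divn_eq Delta r) -/q mulnDr muln1 mulnC leq_add2l; exact: ltnW (ltn_pmod _ r0).
have hn : Delta + q <= omega * (q + 1).
  by rewrite hw mulSn addnC; apply: leq_add => //; rewrite addn1.
have hb := bern_nat q t.
apply: leq_trans (_ : omega * (q + 1) * 'C(r, s) * (r * (q + 1)) ^ s * (q + 1 - t) <= _).
  apply: leq_mul => //; apply: leq_mul; [apply: leq_mul => // | exact: leq_expl hD].
have e1 : omega * (q + 1) * 'C(r, s) * (r * (q + 1)) ^ s * (q + 1 - t) =
   omega * 'C(r, s) * r ^ s * ((q + 1) ^ t * (q + 1 - t)).
  rewrite ht expnS expnMn.
  apply/eqP; rewrite -(eqr_nat rat) !(natrD, natrM, natrX); apply/eqP; ring.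
rewrite e1.
apply: leq_trans (_ : omega * 'C(r, s) * r ^ s * (q ^ t * (q + 1)) <= _).
  by rewrite leq_mul2l hb orbT.
rewrite bd.
have e2 : t * 'C(omega, t) * r ^ s * (q ^ t * (q + 1)) = ('C(omega, t) * q ^ t) * t * r ^ s * (q + 1).
  apply/eqP; rewrite -(eqr_nat rat) !(natrD, natrM, natrX); apply/eqP; ring.
by rewrite e2 !leq_mul2r hk !orbT.
Qed.

Open Scope R_scope.

Lemma INRmul m n : INR (m * n)%N = (INR m * INR n).
Proof. exact: mult_INR. Qed.
Lemma INRadd m n : INR (m + n)%N = (INR m + INR n).
Proof. exact: plus_INR. Qed.
Lemma INRexp m n : INR (m ^ n)%N = (INR m ^ n).
Proof. elim: n => [|n IH] //=; by rewrite expnS INRmul IH. Qed.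
Lemma INRle m n : (m <= n)%N -> (INR m <= INR n).
Proof. by move/ssrnat.leP; apply: le_INR. Qed.
Lemma INRsub m n : (n <= m)%N -> INR (m - n)%N = (INR m - INR n).
Proof. by move/ssrnat.leP; apply: minus_INR. Qed.
Lemma INRpos m : (0 < m)%N -> (0 < INR m).
Proof. by move/ssrnat.leP; apply: lt_0_INR. Qed.

Lemma divpow (x y : R) (s : nat) : y <> 0 -> ((x / y) ^ s = x ^ s / y ^ s).
Proof. move=> y0; by rewrite /Rdiv Rpow_mult_distr pow_inv. Qed.

Lemma rho_ub t omega Delta n (e : rel 'I_n) : (2 <= t)%N -> (t <= omega)%N -> (0 < n)%N ->
  simple_graph e -> in_class Delta omega e -> (rho_t t e <= main_term t omega Delta).
Proof.
move=> t2 tw n0 sg ic.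
have h := upper_nat t2 tw sg ic.
have r0 : (0 < omega.-1)%N by rewrite -ltnS prednK; [apply: leq_trans tw | apply: leq_trans tw; apply: ltnW].
move: h => /INRle; rewrite !INRmul !INRexp => h.
have T0 := INRpos (ltnW t2 : (0 < t)%N).
have R0 := INRpos r0.
have N0 := INRpos n0.
have Rs := pow_lt _ t.-1 R0.
rewrite /rho_t /main_term divpow; last by slra.
set K := INR (k_t t e) in h *.
set C := INR 'C(omega.-1, t.-1) in h *.
set T := INR t in h T0 *.
set Rr := INR omega.-1 in h R0 Rs *.
set D := INR Delta in h *.
set Nn := INR n in h N0 *.
have e1 : (K / Nn = (T * K * Rr ^ t.-1) * / (Nn * T * Rr ^ t.-1)).
  by sfield; repeat split; slra.
have e2 : (/ T * C * (D ^ t.-1 / Rr ^ t.-1) = (Nn * C * D ^ t.-1) * / (Nn * T * Rr ^ t.-1)).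
  by sfield; repeat split; slra.
rewrite e1 e2; apply: Rmult_le_compat_r => //.
apply: Rlt_le; apply: Rinv_0_lt_compat.
by apply: Rmult_lt_0_compat => //; apply: Rmult_lt_0_compat.
Qed.

Lemma turan_in t omega Delta : (2 <= omega)%N -> (0 < Delta)%N ->
  rho_set t Delta omega (turan_rho t (Delta + Delta %/ omega.-1) omega).
Proof.
move=> w2 D0.
set q := Delta %/ omega.-1.
have hw : omega = omega.-1.+1 by rewrite prednK //; apply: ltnW.
have w0 : (0 < omega)%N by apply: ltnW.
have H : (omega * q <= Delta + q)%N.
  rewrite {1}hw mulSn addnC leq_add2r mulnC; exact: leq_trunc_div.
exists (Delta + q)%N, (turan_rel (Delta + q) omega); split; first by apply: ltn_addr.
split; first exact: turan_simple.
split=> //; split.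
  by move=> i; have := turan_deg i w0 H; rewrite addnK.
by move=> S; apply: turan_clique.
Qed.

Lemma turan_lowerR t omega Delta : (2 <= t)%N -> (t <= omega)%N ->
  (t <= Delta %/ omega.-1)%N ->
  (0 < turan_rho t (Delta + Delta %/ omega.-1) omega) /\
  (main_term t omega Delta * (1 - INR t / (INR (Delta %/ omega.-1) + 1))
     <= turan_rho t (Delta + Delta %/ omega.-1) omega).
Proof.
move=> t2 tw tq.
set r := omega.-1; set q := Delta %/ r.
have w2 : (2 <= omega)%N by apply: leq_trans tw.
have w0 : (0 < omega)%N by apply: ltnW.
have hw : omega = r.+1 by rewrite /r prednK.
have r0 : (0 < r)%N by rewrite -ltnS -hw.
have q0 : (0 < q)%N by apply: leq_trans tq; apply: ltnW.
have H : (omega * q <= Delta + q)%N.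
  rewrite {1}hw mulSn addnC leq_add2r mulnC; exact: leq_trunc_div.
have [q' hq'] : exists q', q = q'.+1 by exists q.-1; rewrite prednK.
have hk : ('C(omega, t) * q ^ t <= k_t t (turan_rel (Delta + q) omega))%N.
  by rewrite hq'; apply: turan_lower => //; rewrite -hq'.
have hl := lower_nat t2 tw hk.
rewrite -/r -/q in hl.
have kpos : (0 < k_t t (turan_rel (Delta + q) omega))%N.
  apply: leq_trans hk; rewrite muln_gt0 bin_gt0 tw expn_gt0 q0 //.
have n0 : (0 < Delta + q)%N by apply: ltn_addl.
have D0 : (0 < Delta)%N.
  by rewrite lt0n; apply/eqP => D0; move: q0; rewrite /q D0 div0n.
have tq1 : (t <= q + 1)%N by rewrite addn1; apply: ltnW.
move: hl => /INRle; rewrite !INRmul !INRexp (INRsub tq1) !INRadd => h.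
have T0 := INRpos (ltnW t2 : (0 < t)%N).
have R0 := INRpos r0.
have N0 := INRpos n0.
have K0 := INRpos kpos.
have Q0 := INRpos q0.
have Rs := pow_lt _ t.-1 R0.
rewrite /turan_rho /rho_t /main_term divpow; last by apply: Rgt_not_eq.
rewrite INRadd.
set K := INR (k_t t (turan_rel (Delta + q) omega)) in h K0 *.
set C := INR 'C(r, t.-1) in h *.
set T := INR t in h T0 *.
set Rr := INR r in h R0 Rs *.
set D := INR Delta in h *.
set Q := INR q in h Q0 *.
rewrite INRadd -/D -/Q in N0.
have N1 : 0 < D + Q by slra.
split.
  by apply: Rdiv_lt_0_compat.
have e1 : /T * C * (D ^ t.-1 / Rr ^ t.-1) * (1 - T / (Q + 1)) =
    ((D + Q) * C * D ^ t.-1 * (Q + 1 - T)) * / ((D + Q) * T * Rr ^ t.-1 * (Q + 1)).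
  by sfield; repeat split; slra.
have e2 : K / (D + Q) = (K * T * Rr ^ t.-1 * (Q + 1)) * / ((D + Q) * T * Rr ^ t.-1 * (Q + 1)).
  by sfield; repeat split; slra.
rewrite e1 e2; apply: Rmult_le_compat_r => //.
apply: Rlt_le; apply: Rinv_0_lt_compat.
repeat apply: Rmult_lt_0_compat => //; slra.
Qed.

Lemma conv (L F M d : nat -> R) (N0 : nat) :
  (forall k, (N0 <= k)%N -> 0 < L k /\ L k <= F k /\ F k <= M k /\ M k * (1 - d k) <= L k /\ 0 <= d k) ->
  (forall eps, 0 < eps -> exists N, forall k, (N <= k)%N -> d k < eps) ->
  Un_cv (fun k => F k / L k) 1 /\ Un_cv (fun k => L k / M k) 1.
Proof.
move=> hf hd.
have key : forall eps, 0 < eps -> exists N, forall k, (N <= k)%N ->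
    0 < L k /\ L k <= F k /\ F k <= M k /\ M k * (1 - d k) <= L k /\ 0 <= d k /\
    d k < eps / 4 /\ d k < 1 / 4.
  move=> eps ep.
  have ep' : 0 < Rmin (eps / 4) (1 / 4) by apply: Rmin_pos; slra.
  have [N1 hN1] := hd _ ep'.
  exists (maxn N0 N1) => k; rewrite geq_max => /andP [k0 k1].
  have := hN1 k k1; have := Rmin_l (eps / 4) (1 / 4); have := Rmin_r (eps / 4) (1 / 4).
  have := hf k k0; intuition slra.
split=> eps ep; have [N hN] := key eps ep; exists N => k /ssrnat.leP kN;
  have [L0 [LF [FM [ML [d0 [de d1]]]]]] := hN k kN; rewrite /R_dist.
- set w := F k / L k.
  have hw : F k = w * L k by rewrite /w; sfield; slra.
  have w1 : 1 <= w.
    apply: Rnot_lt_le => hlt.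
    have : w * L k < 1 * L k by apply: Rmult_lt_compat_r.
    slra.
  have w2 : w * (1 - d k) <= 1.
    have h1 : w * L k * (1 - d k) <= M k * (1 - d k).
      by apply: Rmult_le_compat_r; slra.
    apply: Rnot_lt_le => hlt.
    have : 1 * L k < w * (1 - d k) * L k by apply: Rmult_lt_compat_r.
    slra.
  rewrite Rabs_pos_eq; last by slra.
  have w3 : w <= 4 / 3 by snra.
  snra.
- have M0 : 0 < M k by slra.
  set u := L k / M k.
  have hu : L k = u * M k by rewrite /u; sfield; slra.
  have u1 : u <= 1.
    apply: Rnot_lt_le => hlt.
    have : 1 * M k < u * M k by apply: Rmult_lt_compat_r.
    slra.
  have u2 : 1 - d k <= u.
    apply: Rnot_lt_le => hlt.
    have : u * M k < (1 - d k) * M k by apply: Rmult_lt_compat_r.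
    slra.
  rewrite Rabs_left1; slra.
Qed.

Close Scope R_scope.

Theorem mainTheorem6 (t omega : nat) (ht : (2 <= t)%N) (htw : (t <= omega)%N)
  (F : nat -> R) (hF : forall Delta : nat, is_lub (rho_set t Delta omega) (F Delta)) :
  Un_cv (fun Delta => Rdiv (F Delta) (turan_rho t (Delta + Delta %/ omega.-1) omega)) (IZR 1) /\
  Un_cv (fun Delta => Rdiv (turan_rho t (Delta + Delta %/ omega.-1) omega)
                           (main_term t omega Delta)) (IZR 1).
Proof.
Open Scope R_scope.

set r := omega.-1.
have w2 : (2 <= omega)%N by apply: leq_trans htw.
have hw : omega = r.+1 by rewrite /r prednK //; apply: ltnW.
have r0 : (0 < r)%N by rewrite -ltnS -hw.
apply: (@conv (fun Delta => turan_rho t (Delta + Delta %/ r) omega) F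
          (fun Delta => main_term t omega Delta)
          (fun Delta => INR t / (INR (Delta %/ r) + 1)) (t * r)%N).
- move=> k hk.
  have tq : (t <= k %/ r)%N by rewrite leq_divRL.
  have k0 : (0 < k)%N.
    by apply: leq_trans hk; rewrite muln_gt0 r0 andbT; apply: leq_trans (ht : (2 <= t)%N).
  have [Lp Ll] := turan_lowerR ht htw tq.
  have Lin := turan_in t w2 k0.
  have LF : turan_rho t (k + k %/ r) omega <= F k by case: (hF k) => ub _; apply: ub.
  have FM : F k <= main_term t omega k.
    case: (hF k) => _; apply => x [n [e [n0 [sg [ic ->]]]]].
    exact: rho_ub.
  have T0 := INRpos (ltnW ht : (0 < t)%N).
  have Q0 := pos_INR (k %/ r).
  have d0 : 0 <= INR t / (INR (k %/ r) + 1).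
    by apply: Rlt_le; apply: Rdiv_lt_0_compat; slra.
  by repeat split.
- move=> eps ep.
  have T0 := INRpos (ltnW ht : (0 < t)%N).
  have [N [hN N0]] := archimed_cor1 (eps / INR t) (Rdiv_lt_0_compat _ _ ep T0).
  exists (N * r)%N => k hk.
  have qN : (N <= k %/ r)%N by rewrite leq_divRL.
  have NR := INRpos (introT ssrnat.ltP N0).
  have hq := INRle qN.
  have h1 : / (INR (k %/ r) + 1) <= / INR N.
    by apply: Rinv_le_contravar => //; slra.
  have h2 : INR t / (INR (k %/ r) + 1) <= INR t * / INR N.
    by rewrite /Rdiv; apply: Rmult_le_compat_l; slra.
  have h3 : INR t * / INR N < INR t * (eps / INR t).
    by apply: Rmult_lt_compat_l.
  have h4 : INR t * (eps / INR t) = eps by sfield; slra.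
  slra.
Qed.
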